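(* Let $\Sigma\in\mathcal{G}_n$, let $S=S(\Sigma)$, $W=W(\Sigma)$, and let $Q_0$ be the unique regular rational orthogonal matrix with $Q_0^{\rm T}SQ_0=S(\Sigma^{\rm T})$, with level $\ell_0$. Let $p$ be an odd prime with $p\nmid\ell_0$. If $z$ is an integral vector with $W^{\rm T}z\equiv0\pmod p$, then $S^{\rm T}z\equiv0\pmod p$.
   Context: An oriented graph on vertices $v_1,\dots,v_n$ is a simple graph with each edge directed; its skew-adjacency matrix $S(\Sigma)=(s_{ij})$ has $s_{ij}=1$ if $(v_i,v_j)$ is an arc, $-1$ if $(v_j,v_i)$ is an arc, $0$ otherwise. The converse $\Sigma^{\rm T}$ reverses every arc, so $S(\Sigma^{\rm T})=-S(\Sigma)$. With $e$ the all-one vector, $W(\Sigma)=[e,Se,\dots,S^{n-1}e]$. $\mathcal{G}_n$ is the set of $n$-vertex oriented graphs with $2^{-\lfloor n/2\rfloor}\det W(\Sigma)$ an odd square-free integer. A rational orthogonal matrix $Q$ is regular if $Qe=e$; its level is the least positive integer $k$ with $kQ$ integral. Since $\det W(\Sigma)\ne0$, $Q_0$ exists and is unique. *)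

(* Defs.v *)
From HB Require Import structures.
From mathcomp Require Import all_boot all_order all_algebra.
Set Implicit Arguments. Unset Strict Implicit. Unset Printing Implicit Defensive.
Import Order.TTheory GRing.Theory Num.Theory.
Local Open Scope ring_scope.

Definition oriented_graph (n : nat) (arc : rel 'I_n) : Prop :=
  (forall i, ~~ arc i i) /\ (forall i j, arc i j -> ~~ arc j i).

Definition skew_adj (n : nat) (arc : rel 'I_n) : 'M[int]_n :=
  \matrix_(i, j) (if arc i j then 1 else if arc j i then -1 else 0).

Definition converse (n : nat) (arc : rel 'I_n) : rel 'I_n := fun i j => arc j i.

Definition ones (R : nzRingType) (n : nat) : 'cV[R]_n := const_mx 1.

Definition walk_matrix (n : nat) (S : 'M[int]_n) : 'M[int]_n :=
  \matrix_(i, j) (iter j (mulmx S) (ones int n)) i ord0.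

Definition squarefree_int (d : int) : Prop :=
  forall p : nat, prime p -> ~ ((p ^ 2)%:Z %| d)%Z.

Definition in_G (n : nat) (arc : rel 'I_n) : Prop :=
  exists d : int,
    \det (walk_matrix (skew_adj arc)) = (2 ^ (n./2))%:Z * d
    /\ odd `|d|%N /\ squarefree_int d.

Definition orthogonal_mx (n : nat) (Q : 'M[rat]_n) : Prop := Q^T *m Q = 1%:M.
Definition regular_mx (n : nat) (Q : 'M[rat]_n) : Prop := Q *m ones rat n = ones rat n.

Definition integral_mx (n : nat) (A : 'M[rat]_n) : Prop :=
  forall i j, exists z : int, A i j = z%:~R.

Definition is_level (n : nat) (Q : 'M[rat]_n) (l : nat) : Prop :=
  (0 < l)%N /\ integral_mx (l%:R *: Q) /\
  (forall k : nat, (0 < k)%N -> integral_mx (k%:R *: Q) -> (l <= k)%N).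

Definition zero_mod (n : nat) (p : nat) (v : 'cV[int]_n) : Prop :=
  forall i, (p%:Z %| v i ord0)%Z.

(* Main.v *)
Require Import Defs.
From HB Require Import structures.
From mathcomp Require Import all_boot all_order all_algebra.
Import Order.TTheory GRing.Theory Num.Theory.
Local Open Scope ring_scope.
Set Implicit Arguments. Unset Strict Implicit.

Lemma iterE (R : comNzRingType) m (S : 'M[R]_m.+1) (v : 'cV[R]_m.+1) j :
  iter j (mulmx S) v = S ^+ j *m v.
Proof.
elim: j => [|j IH] /=; first by rewrite expr0 mul1mx.
by rewrite IH exprS mulmxA.
Qed.

Lemma horner_mx_sum (R : comNzRingType) m (A : 'M[R]_m.+1) (q : {poly R}) :
  horner_mx A q = \sum_(i < size q) q`_i *: A ^+ i.
Proof.
rewrite -{1}[q]coefK poly_def rmorph_sum /=; apply: eq_bigr => i _.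
by rewrite linearZ /= rmorphXn /= horner_mx_X.
Qed.

Lemma walk_comp m (S : 'M[int]_m.+1) :
  exists C : 'M[int]_m.+1, S *m walk_matrix S = walk_matrix S *m C.
Proof.
set c := char_poly S.
exists (\matrix_(i, j) (if (j < m)%N then ((i : nat) == j.+1)%:R else - c`_i)).
apply/matrixP => k j.
have colW : forall k0 j0 : 'I_m.+1,
    walk_matrix S k0 j0 = (S ^+ j0 *m ones int m.+1) k0 ord0.
  by move=> k0 j0; rewrite mxE iterE.
transitivity ((S *m (S ^+ j *m ones int m.+1)) k ord0).
  by rewrite [in RHS]mxE [in LHS]mxE; apply: eq_bigr => i _; rewrite colW.
rewrite mulmxA mulmxE -exprS [in RHS]mxE.
under eq_bigr => i _ do rewrite [X in _ * X]mxE.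
case: (ltnP j m) => hj.

  pose j1 : 'I_m.+1 := Ordinal (hj : (j.+1 < m.+1)%N).
  rewrite (bigD1 j1) //= big1 => [|i hi]; last first.

    have -> : ((i : nat) == j.+1) = false.
      by apply/negbTE; apply: contra hi => /eqP h; apply/eqP/val_inj.
    by rewrite mulr0.
  by rewrite eqxx mulr1 addr0 colW.

have hjm : (j : nat) = m by apply/eqP; rewrite eqn_leq hj -ltnS ltn_ord.
have CH := Cayley_Hamilton S.
rewrite horner_mx_sum -/c size_char_poly big_ord_recr /= in CH.
have lc : c`_m.+1 = 1.
  have := char_poly_monic S; rewrite monicE /lead_coef -/c size_char_poly.
  by move/eqP.
rewrite lc scale1r in CH.
have HS : S ^+ m.+1 = - \sum_(i < m.+1) c`_i *: S ^+ i.
  by apply/eqP; rewrite -addr_eq0 addrC CH.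
rewrite hjm HS mulNmx mulmx_suml mxE summxE -sumrN.
apply: eq_bigr => i _.
by rewrite -scalemxAl [in LHS]mxE colW mulrN mulrC.
Qed.
Lemma smith_ker m (M : 'M[int]_m.+1) p : prime p ->
  ~ ((p ^ 2)%:Z %| \det M)%Z ->
  exists c : 'cV['F_p]_m.+1, forall x, map_mx intr M *m x = 0 ->
    exists a, x = a *: c.
Proof.
move=> Hp Hnd.
have [L uL [R uR [d sd EM]]] := int_Smith_normal_form M.
set Dm := \matrix_(i, j) _ in EM.
have EDm : Dm = diag_mx (\row_i d`_i) by apply/matrixP=> i j; rewrite !mxE.
have ndiv : forall i : 'I_m.+1, i != ord_max -> ~~ (p%:Z %| d`_i)%Z.
  move=> i hi; apply/negP => pdi; apply: Hnd.
  have him : (i < m)%N.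
    have := ltn_ord i; rewrite ltnS leq_eqVlt => /orP [/eqP h|//].
    by exfalso; move/negP: hi; apply; apply/eqP/val_inj.
  have hdm : (d`_i %| d`_m)%Z.
    case: (ltnP m (size d)) => hs.
      apply: (sorted_ltn_nth dvdz_trans 0 sd) => //; rewrite inE //.
      exact: ltn_trans him hs.
    by rewrite (nth_default _ hs) dvdz0.
  have h2 : ((p ^ 2)%:Z %| d`_i * d`_m)%Z.
    by rewrite expnS expn1 PoszM; apply: dvdz_mul => //; apply: dvdz_trans hdm.
  have h3 : (d`_i * d`_m %| \prod_(j < m.+1) d`_j)%Z.
    rewrite (bigD1 ord_max) //= (bigD1 i) ?hi //= mulrA [d`_m * _]mulrC.
    exact: dvdz_mulr.
  have h4 : (\prod_(j < m.+1) d`_j %| \det M)%Z.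
    rewrite EM !det_mulmx EDm det_diag.
    under eq_bigr do rewrite mxE.
    by apply: dvdz_mulr; apply: dvdz_mull; apply: dvdzz.
  exact: dvdz_trans h2 (dvdz_trans h3 h4).
pose Lp := map_mx (intr : int -> 'F_p) L.
pose Rp := map_mx (intr : int -> 'F_p) R.
have uLp : Lp \in unitmx by rewrite unitmxE det_map_mx rmorph_unit // -unitmxE.
have uRp : Rp \in unitmx by rewrite unitmxE det_map_mx rmorph_unit // -unitmxE.
exists (invmx Rp *m delta_mx ord_max 0).
move=> x hx.
rewrite EM !map_mxM EDm map_diag_mx -/Lp -/Rp in hx.
have := congr1 (mulmx (invmx Lp)) hx.
rewrite mulmx0 -!mulmxA mulKmx // => hD.
set w := Rp *m x in hD.
have hw : w = w ord_max 0 *: delta_mx ord_max 0.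
  apply/matrixP => i j; rewrite !mxE ord1 eqxx andbT.
  case: (eqVneq i ord_max) => [->|hi]; first by rewrite mulr1.
  rewrite mulr0.
  move/matrixP: hD => /(_ i 0); rewrite mul_diag_mx !mxE => /eqP.
  rewrite mulf_eq0 => /orP [|/eqP //].
  by rewrite -(dvdz_pcharf (pchar_Fp Hp)) (negbTE (ndiv i hi)).
exists (w ord_max 0).
by rewrite scalemxAr -hw /w mulKmx.
Qed.
Lemma map_iter m (S : 'M[int]_m.+1) j :
  map_mx (intr : int -> rat) (iter j (mulmx S) (ones int m.+1)) =
  iter j (mulmx (map_mx intr S)) (ones rat m.+1).
Proof.
elim: j => [|j IH] /=.
  by apply/matrixP => i k; rewrite !mxE rmorph1.
by rewrite map_mxM IH.
Qed.

Lemma rat_part m (S : 'M[int]_m.+1) (Q0 : 'M[rat]_m.+1) :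
  Q0^T *m Q0 = 1%:M -> Q0 *m ones rat _ = ones rat _ ->
  Q0^T *m map_mx intr S *m Q0 = - map_mx intr S ->
  map_mx intr S *m Q0 = - (Q0 *m map_mx intr S) /\
  (map_mx intr (walk_matrix S))^T *m Q0 =
     diag_mx (\row_j (-1) ^+ (j : nat)) *m (map_mx intr (walk_matrix S))^T.
Proof.
set Sq := map_mx intr S => Ho Hr HQ.
have Ho' : Q0 *m Q0^T = 1%:M by apply: mulmx1C.
split.
  have := congr1 (mulmx Q0) HQ.
  by rewrite !mulmxA Ho' mul1mx mulmxN.
have H1 : Q0^T *m Sq = - (Sq *m Q0^T).
  have := congr1 (mulmx^~ Q0^T) HQ.
  by rewrite -mulmxA Ho' mulmx1 mulNmx.
have He : Q0^T *m ones rat _ = ones rat _.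
  by rewrite -{1}Hr mulmxA Ho mul1mx.
have Hit : forall j, Q0^T *m iter j (mulmx Sq) (ones rat m.+1) =
    (-1) ^+ j *: iter j (mulmx Sq) (ones rat m.+1).
  elim=> [|j IH] /=; first by rewrite expr0 scale1r.
  rewrite mulmxA H1 mulNmx -mulmxA IH scalemxAr exprS mulN1r scaleNr.
  by rewrite mulmxN.
have Hcol : Q0^T *m map_mx intr (walk_matrix S) =
    map_mx intr (walk_matrix S) *m diag_mx (\row_j (-1) ^+ (j : nat)).
  apply/matrixP => k j.
  rewrite mul_mx_diag !mxE.
  transitivity ((Q0^T *m iter j (mulmx Sq) (ones rat m.+1)) k 0).
    rewrite mxE; apply: eq_bigr => i _.
    by rewrite !mxE -map_iter mxE.
  by rewrite Hit !mxE -map_iter mxE mulrC.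
have := congr1 trmx Hcol.
by rewrite !trmx_mul trmxK tr_diag_mx.
Qed.

Theorem lemma3p4 (n : nat) (arc : rel 'I_n)
  (Hor : oriented_graph arc) (HG : in_G arc)
  (Q0 : 'M[rat]_n) (Horth : orthogonal_mx Q0) (Hreg : regular_mx Q0)
  (HQ0 : Q0^T *m map_mx intr (skew_adj arc) *m Q0
         = map_mx intr (skew_adj (converse arc)))
  (l0 : nat) (Hl0 : is_level Q0 l0)
  (p : nat) (Hp : prime p) (Hodd : odd p) (Hpl : ~~ (p %| l0)%N)
  (z : 'cV[int]_n)
  (Hz : zero_mod p ((walk_matrix (skew_adj arc))^T *m z)) :
  zero_mod p ((skew_adj arc)^T *m z).
Proof.
destruct n as [|m].
  by move=> [i hi].
set S := skew_adj arc.
have zmodE : forall v : 'cV[int]_m.+1,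
    zero_mod p v <-> map_mx (intr : int -> 'F_p) v = 0.
  move=> v; split => [h|h i].
    apply/matrixP => i j; rewrite ord1 !mxE; apply/eqP.
    by rewrite -(dvdz_pcharf (pchar_Fp Hp)); exact: h.
  move/matrixP: h => /(_ i 0); rewrite !mxE => /eqP.
  by rewrite -(dvdz_pcharf (pchar_Fp Hp)).
have StS : S^T = - S.
  case: Hor => H1 H2; apply/matrixP => i j; rewrite !mxE.
  case a: (arc i j); case b: (arc j i) => //=; try by rewrite ?opprK ?oppr0.
  by move: (H2 _ _ a); rewrite b.
have Sconv : skew_adj (converse arc) = - S.
  by rewrite -StS; apply/matrixP => i j; rewrite !mxE.
rewrite Sconv map_mxN in HQ0.
have [HSQ HWQ] := rat_part Horth Hreg HQ0.
case: Hl0 => _ [Hint _].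
have Hint' : forall i j, exists y : int, (l0%:R *: Q0) i j == y%:~R.
  by move=> i j; have [y hy] := Hint i j; exists y; apply/eqP.
pose Qi := \matrix_(i, j) xchoose (Hint' i j).
have hQi : map_mx intr Qi = l0%:R *: Q0.
  apply/matrixP => i j; rewrite [in LHS]mxE [in LHS]mxE.
  exact/esym/eqP/(xchooseP (Hint' i j)).
have inj : forall (A B : 'M[int]_m.+1),
    map_mx (intr : int -> rat) A = map_mx intr B -> A = B.
  move=> A B /matrixP h; apply/matrixP => i j; move: (h i j); rewrite !mxE.
  exact: intr_inj.
have I1 : Qi^T *m Qi = ((l0 ^ 2)%N%:R)%:M.
  apply: inj; rewrite map_mxM -map_trmx hQi map_scalar_mx.
  have trZ : (l0%:R *: Q0)^T = l0%:R *: Q0^T by apply/matrixP => i j; rewrite !mxE.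
  rewrite trZ -scalemxAl -scalemxAr Horth scalerA scalemx1.
  by rewrite rmorph_nat natrX expr2.
have I2 : S *m Qi = - (Qi *m S).
  apply: inj; rewrite map_mxN !map_mxM hQi -scalemxAr -scalemxAl HSQ.
  by rewrite scalerN.
pose D : 'M[int]_m.+1 := diag_mx (\row_j (-1) ^+ (j : nat)).
have I3 : (walk_matrix S)^T *m Qi = l0%:R *: (D *m (walk_matrix S)^T).
  apply: inj; rewrite map_mxZ !map_mxM -!map_trmx hQi -scalemxAr HWQ.
  rewrite map_diag_mx rmorph_nat; congr (_ *: (diag_mx _ *m _)).
  by apply/matrixP => i j; rewrite !mxE rmorphXn rmorphN1.
have Hnd : ~ ((p ^ 2)%:Z %| \det (walk_matrix S)^T)%Z.
  rewrite det_tr; case: HG => d [hd [_ hsq]]; rewrite /S hd => h.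
  apply: (hsq p Hp); move: h; rewrite Gauss_dvdzr //.
  have cp2 : coprime p 2.
    rewrite prime_coprime // dvdn_prime2 //; apply/eqP => e.
    by rewrite e in Hodd.
  by rewrite /coprimez /gcdz /=; apply: coprimeXl; apply: coprimeXr.
have [c hc] := smith_ker Hp Hnd.
have [C hC] := walk_comp S.
have hz0 : map_mx (intr : int -> 'F_p) ((walk_matrix S)^T *m z) = 0.
  by apply/zmodE.
apply/zmodE.
set zp := map_mx (intr : int -> 'F_p) z.
set A := map_mx (intr : int -> 'F_p) (walk_matrix S)^T.
have hz : A *m zp = 0 by rewrite -map_mxM.
have hu : A *m map_mx (intr : int -> 'F_p) (S^T *m z) = 0.
  have e : (walk_matrix S)^T *m (S^T *m z) = C^T *m ((walk_matrix S)^T *m z).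
    by rewrite mulmxA -trmx_mul hC trmx_mul mulmxA.
  by rewrite -map_mxM e map_mxM hz0 mulmx0.
set Qp := map_mx (intr : int -> 'F_p) Qi.
set Sp := map_mx (intr : int -> 'F_p) S.
have hv : A *m (Qp *m zp) = 0.
  have e : (walk_matrix S)^T *m (Qi *m z) =
      l0%:R *: (D *m ((walk_matrix S)^T *m z)).
    by rewrite mulmxA I3 -scalemxAl mulmxA.
  by rewrite -!map_mxM e map_mxZ map_mxM hz0 mulmx0 scaler0.
set u := map_mx (intr : int -> 'F_p) (S^T *m z).
case: (eqVneq zp 0) => [z0|znz].
  by rewrite /u map_mxM -/zp z0 mulmx0.
have [a ea] := hc _ hz.
have anz : a != 0 by apply: contraNneq znz => a0; rewrite ea a0 scale0r.
have [b eb] := hc _ hu.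
have [g eg] := hc _ hv.
set mu := b / a.
set la := g / a.
have hu' : u = mu *: zp by rewrite /u eb ea scalerA divfK.
have hv' : Qp *m zp = la *: zp by rewrite eg ea scalerA divfK.
have hSz : Sp *m zp = - (mu *: zp).
  by rewrite -hu' /u StS mulNmx map_mxN map_mxM opprK.
have hI2 : Sp *m Qp = - (Qp *m Sp) by rewrite -!map_mxM I2 map_mxN.
have E1 : Sp *m (Qp *m zp) = - ((la * mu) *: zp).
  by rewrite hv' -scalemxAr hSz scalerN scalerA.
have E2 : Sp *m (Qp *m zp) = (mu * la) *: zp.
  by rewrite mulmxA hI2 mulNmx -mulmxA hSz mulmxN opprK -scalemxAr hv' scalerA.
have key : ((mu * la) *+ 2) *: zp = 0.
  have : (mu * la) *: zp = - ((mu * la) *: zp) by rewrite -[LHS]E2 E1 mulrC.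
  by move/eqP; rewrite -addr_eq0 -scalerDl -mulr2n => /eqP.
move/eqP: key; rewrite scaler_eq0 (negbTE znz) orbF -mulr_natr.
rewrite mulf_eq0 -(dvdn_pcharf (pchar_Fp Hp)) orbC.
have -> : (p %| 2)%N = false.
  by rewrite dvdn_prime2 //; apply/eqP => e; rewrite e in Hodd.
rewrite /= mulf_eq0 => /orP [/eqP mu0|/eqP la0].
  by rewrite hu' mu0 scale0r.
exfalso; move/negP: Hpl; apply.
have : map_mx (intr : int -> 'F_p) Qi^T *m (Qp *m zp) = 0.
  by rewrite hv' la0 scale0r mulmx0.
rewrite mulmxA -map_mxM I1 map_scalar_mx mul_scalar_mx => /eqP.
rewrite scaler_eq0 (negbTE znz) orbF rmorph_nat.
by rewrite -(dvdn_pcharf (pchar_Fp Hp)) Euclid_dvdX // andbT.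
Qed.
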